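(* Let $M=M(S^2;\frac{q_1}{p_1},\frac{q_2}{p_2},\frac{q_3}{p_3})$ with $e(M)\neq0$. If every element of $H_1(M,\mathbb{Z})$ has order dividing $2$, or if $p_1,p_2,p_3$ are weakly coprime, then $M$ has no exceptional abelian characters, i.e. $x_M=0$.
   Context: $M(S^2;\frac{q_1}{p_1},\frac{q_2}{p_2},\frac{q_3}{p_3})$ ($(p_i,q_i)$ coprime, $p_i\ge1$) is the closed Seifert manifold obtained from $S_{0,3}\times S^1$ by gluing solid tori whose meridians are $p_ic_i+q_ih_i$; $e(M)=\sum_iq_i/p_i$; $\pi_1(M)=\langle c_1,c_2,c_3,h\mid [c_i,h]=1=c_i^{p_i}h^{q_i},\ c_1c_2c_3=1\rangle$. Integers $p_1,p_2,p_3$ are weakly coprime if one of them is coprime with each of the other two. An abelian character is the trace of a diagonal representation $\pi_1(M)\to\mathrm{SL}_2(\mathbb{C})$; it is exceptional if it is the trace of a representation $\rho$ with $\rho(h)=\pm I$ and $\rho(c_i)\neq\pm I$ for $i=1,2,3$; $x_M$ is the number of exceptional abelian characters. *)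

(* Defs.v *)
From mathcomp Require Import all_boot all_order all_algebra.
From mathcomp Require Import complex Rstruct.
Set Implicit Arguments. Unset Strict Implicit. Unset Printing Implicit Defensive.
Import Order.TTheory GRing.Theory Num.Theory.
Local Open Scope ring_scope.

Definition CC : Type := (Rdefinitions.R)[i].

(* Generators of pi_1(M) = < c_1, c_2, c_3, h | ... >, indexed by 'I_4:
   c_i is gc i (i : 'I_3, i.e. c_1,c_2,c_3 are gc 0, gc 1, gc 2) and h is gh. *)
Definition gc (i : 'I_3) : 'I_4 := widen_ord (leqnSn 3) i.
Definition gh : 'I_4 := ord_max.
Definition i0 : 'I_3 := inord 0.
Definition i1 : 'I_3 := inord 1.
Definition i2 : 'I_3 := inord 2.

(* Words in the generators and their inverses: (g, true) stands for g^-1.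
   Every element of pi_1(M) is represented by such a word. *)
Definition word := seq ('I_4 * bool).

Definition assignment := 'I_4 -> 'M[CC]_2.

Definition eval_word (r : assignment) (w : word) : 'M[CC]_2 :=
  \prod_(x <- w) (if x.2 then (r x.1)^-1 else r x.1).

Definition is_SL2_rep (p : 'I_3 -> nat) (q : 'I_3 -> int) (r : assignment) :=
  [/\ forall g, \det (r g) = 1,
      forall i, r (gc i) * r gh = r gh * r (gc i),
      forall i, r (gc i) ^+ p i * r gh ^ q i = 1
    & r (gc i0) * r (gc i1) * r (gc i2) = 1].

Definition character (r : assignment) : word -> CC :=
  fun w => \tr (eval_word r w).

Definition is_diag_rep (r : assignment) := forall g, is_diag_mx (r g).

Definition abelian_character p q (chi : word -> CC) :=
  exists r, [/\ is_SL2_rep p q r, is_diag_rep r & chi = character r].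

Definition exceptional_abelian_character p q (chi : word -> CC) :=
  abelian_character p q chi /\
  exists rho, [/\ is_SL2_rep p q rho, chi = character rho,
                  rho gh = 1 \/ rho gh = -1
                & forall i, rho (gc i) <> 1 /\ rho (gc i) <> -1].

Definition euler_number (p : 'I_3 -> nat) (q : 'I_3 -> int) : rat :=
  \sum_(i < 3) (q i)%:~R / (p i)%:R.

(* H_1(M,Z) = abelianization of pi_1(M) = Z^4 / L, where Z^4 has basis
   (c_1, c_2, c_3, h) and L is spanned by the relators
   p_i c_i + q_i h (i = 1,2,3) and c_1 + c_2 + c_3. *)
Definition in_relation_lattice (p : 'I_3 -> nat) (q : 'I_3 -> int)
    (v : 'I_4 -> int) :=
  exists (a : 'I_3 -> int) (b : int),
    (forall i, v (gc i) = a i * (p i)%:Z + b) /\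
    v gh = \sum_(i < 3) a i * q i.

Definition H1_exponent_2 p q :=
  forall v : 'I_4 -> int, in_relation_lattice p q (fun g => 2 * v g).

Definition weakly_coprime (p : 'I_3 -> nat) :=
  exists i : 'I_3, forall j : 'I_3, j != i -> coprime (p i) (p j).

(* Main.v *)
Require Import Defs.
From mathcomp Require Import all_boot all_order all_algebra.
From mathcomp Require Import complex Rstruct.
From mathcomp Require Import ring.
Import Order.TTheory GRing.Theory Num.Theory.
Local Open Scope ring_scope.
Lemma sq1_pow (R : pzRingType) (x : R) k : x * x = 1 -> x ^+ k * x ^+ k = 1.
Proof. by move=> h; rewrite -exprD addnn -mul2n exprM expr2 h expr1n. Qed.

Lemma pow_invol (R : unitRingType) (x : R) (z : int) : x * x = 1 -> x ^ z = x ^+ `|z|%N.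
Proof.
move=> h; case: z => n //=.
have hy := @sq1_pow _ x n.+1 h.
have u : x ^+ n.+1 \is a GRing.unit by apply/unitrP; exists (x ^+ n.+1).
by rewrite -[LHS]mulr1 -hy mulrA mulVr ?mul1r.
Qed.

Lemma pm1_pow (R : pzRingType) (x : R) k : x = 1 \/ x = -1 -> x ^+ k = 1 \/ x ^+ k = -1.
Proof.
case=> ->; first by left; rewrite expr1n.
elim: k => [|k [IH|IH]]; first by left; rewrite expr0.
  by right; rewrite exprS IH mulr1.
by left; rewrite exprS IH mulrNN mulr1.
Qed.

Lemma neg_pow (R : pzRingType) (x : R) k : (- x) ^+ k = x ^+ k \/ (- x) ^+ k = - x ^+ k.
Proof.
elim: k => [|k [IH|IH]]; first by left.
  by right; rewrite !exprS IH mulNr.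
by left; rewrite !exprS IH mulrNN.
Qed.

Lemma three_lemma (F : fieldType) (x y z : F) (m n k : nat) :
  x * y * z = 1 -> x ^+ (m * 2) = 1 -> y ^+ (n * 2) = 1 -> z ^+ (k * 2) = 1 ->
  coprime m n -> coprime m k -> (0 < m)%N -> x ^+ 2 = 1.
Proof.
move=> hxyz hx hy hz cmn cmk m0.
have hx2 : x ^+ (n * k * 2) = 1.
  have : (x * y * z) ^+ (n * k * 2) = 1 by rewrite hxyz expr1n.
  rewrite !exprMn.
  have -> : y ^+ (n * k * 2) = 1 by rewrite mulnAC exprM hy expr1n.
  have -> : z ^+ (n * k * 2) = 1 by rewrite -mulnA mulnC exprM hz expr1n.
  by rewrite !mulr1.
have g2 : gcdn (m * 2) (n * k * 2) = 2%N.
  have : coprime m (n * k) by rewrite coprimeMr cmn cmk.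
  by rewrite /coprime => /eqP c; rewrite -muln_gcdl c.
have m20 : (0 < m * 2)%N by rewrite muln_gt0 m0.
have [a _ /dvdnP [t ht]] := Bezoutl (n * k * 2) m20.
have : x ^+ (t * (m * 2)) = 1 by rewrite mulnC exprM hx expr1n.
by rewrite -ht exprD g2 mulnC exprM hx2 expr1n mulr1.
Qed.

Lemma hstep (F : fieldType) (l e : F) (p : nat) (q a b : int) :
  e * e = 1 -> l != 0 -> l ^+ p * e ^+ `|q|%N = 1 ->
  l ^ (a * p%:Z + b) = e ^ (q * a) * l ^ b.
Proof.
move=> he l0 h.
have hp : l ^+ p = e ^ q.
  rewrite pow_invol //; rewrite -[LHS]mulr1 -(@sq1_pow _ e `|q|%N he) mulrA h mul1r //.
rewrite expfzDr // (mulrC a) -[l ^ _]exprz_exp. have -> : l ^ p%:Z = l ^+ p by []. by rewrite hp exprz_exp.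
Qed.

Lemma h1_lemma (F : fieldType) (l0 l1 l2 e : F) (p0 p1 p2 : nat) (q0 q1 q2 a0 a1 a2 b : int) :
  e * e = 1 -> l0 != 0 -> l1 != 0 -> l2 != 0 -> l0 * l1 * l2 = 1 ->
  l0 ^+ p0 * e ^+ `|q0|%N = 1 -> l1 ^+ p1 * e ^+ `|q1|%N = 1 -> l2 ^+ p2 * e ^+ `|q2|%N = 1 ->
  2 = a0 * p0%:Z + b -> 0 = a1 * p1%:Z + b -> 0 = a2 * p2%:Z + b ->
  0 = a0 * q0 + a1 * q1 + a2 * q2 -> l0 ^+ 2 = 1.
Proof.
move=> he n0 n1 n2 hl h0 h1 h2 e0 e1 e2 es.
have e0' : e != 0 by apply/eqP => ez; move: he; rewrite ez mul0r => /eqP; rewrite eq_sym oner_eq0.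
have -> : l0 ^+ 2 = l0 ^ (a0 * p0%:Z + b) * l1 ^ (a1 * p1%:Z + b) * l2 ^ (a2 * p2%:Z + b).
  by rewrite -e0 -e1 -e2 !expr0z !mulr1.
rewrite (@hstep _ _ _ _ _ _ _ he n0 h0) (@hstep _ _ _ _ _ _ _ he n1 h1) (@hstep _ _ _ _ _ _ _ he n2 h2).
have -> : e ^ (q0 * a0) * l0 ^ b * (e ^ (q1 * a1) * l1 ^ b) * (e ^ (q2 * a2) * l2 ^ b)
  = e ^ (q0 * a0) * e ^ (q1 * a1) * e ^ (q2 * a2) * (l0 ^ b * l1 ^ b * l2 ^ b) by ring.
rewrite -!expfzMl hl exp1rz mulr1 -!expfzDr //.
by rewrite (mulrC q0) (mulrC q1) (mulrC q2) -es expr0z.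
Qed.

Section M2.
Variable R : numDomainType.
Lemma ord2_cases (i : 'I_2) : i = 0 \/ i = 1.
Proof. case: i => [[|[|k]] Hk]; [left|right|by []]; exact: val_inj. Qed.

Lemma l01 : lift (0 : 'I_2) (0 : 'I_1) = 1.
Proof. exact: val_inj. Qed.

Lemma mx2P (A B : 'M[R]_2) : A 0 0 = B 0 0 -> A 0 1 = B 0 1 ->
  A 1 0 = B 1 0 -> A 1 1 = B 1 1 -> A = B.
Proof.
move=> h00 h01 h10 h11; apply/matrixP => i j.
by case: (ord2_cases i) => ->; case: (ord2_cases j) => ->.
Qed.

Lemma mul2E (A B : 'M[R]_2) i j : (A * B) i j = A i 0 * B 0 j + A i 1 * B 1 j.
Proof. rewrite -mulmxE mxE big_ord_recl big_ord1 l01. done. Qed.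

Lemma tr2E (A : 'M[R]_2) : \tr A = A 0 0 + A 1 1.
Proof. by rewrite /mxtrace big_ord_recl big_ord1 l01. Qed.

Lemma det2E (A : 'M[R]_2) : \det A = A 0 0 * A 1 1 - A 0 1 * A 1 0.
Proof.
rewrite (expand_det_row _ 0) big_ord_recl big_ord1 /cofactor !det_mx11 !mxE /=.
have e1 : lift (0 : 'I_2) (0 : 'I_1) = 1 by apply: val_inj.
have e2 : lift (ord0 : 'I_2) (ord0 : 'I_1) = 1 by apply: val_inj.
have e3 : lift (1 : 'I_2) (0 : 'I_1) = 0 by apply: val_inj.
have e4 : (ord0 : 'I_2) = 0 by apply: val_inj.
rewrite e1 e3 ?e2 e4 /=. have -> : (@nat_of_ord 2 0%R + @nat_of_ord 2 0%R)%N = 0%N by []. have -> : (@nat_of_ord 2 0%R + bump 0 0)%N = 1%N by []. rewrite expr0 expr1 !mul1r mulN1r mulrN. done.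
Qed.


Lemma unip (B : 'M[R]_2) (p : nat) : (0 < p)%N -> \tr B = 2 -> \det B = 1 ->
  (B ^+ p) 0 1 = 0 -> (B ^+ p) 1 0 = 0 -> B = 1.
Proof.
move=> p0; rewrite tr2E det2E => ht hd h01 h10.
set N := B - 1.
have e : B 1 1 = 2 - B 0 0 by rewrite -ht; ring.
have f : B 0 1 * B 1 0 = B 0 0 * B 1 1 - 1 by rewrite -hd; ring.
have hN2 : N * N = 0.
  apply: mx2P; rewrite !mul2E !mxE /=.
  - by rewrite !subr0 f e; ring.
  - by rewrite !subr0 e; ring.
  - by rewrite !subr0 e; ring.
  - by rewrite !subr0 [B 1 0 * _]mulrC f e; ring.
have hB : B = 1 + N by rewrite /N addrC subrK.
have hpow : forall n, B ^+ n = 1 + N *+ n.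
  elim=> [|n IH]; first by rewrite expr0 mulr0n addr0.
  rewrite exprSr IH hB mulrDl mul1r mulrDr mulr1 mulrnAl hN2 mul0rn addr0.
  by rewrite mulrSr !addrA -!addrA; congr (_ + _); rewrite addrA addrC.
move: h01 h10; rewrite hpow !mxE /= !add0r !mulmxnE => h01 h10.
have n01 : N 0 1 = 0 by apply/eqP; move/eqP: h01; rewrite mulrn_eq0 eqn0Ngt p0.
have n10 : N 1 0 = 0 by apply/eqP; move/eqP: h10; rewrite mulrn_eq0 eqn0Ngt p0.
have n00 : N 0 0 = 0.
  have := congr1 (fun M : 'M[R]_2 => M 0 0) hN2; rewrite /= mul2E n01 mul0r addr0.
  by rewrite !mxE /=; move/eqP; rewrite mulf_eq0 orbb => /eqP.
have n11 : N 1 1 = 0.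
  have := congr1 (fun M : 'M[R]_2 => M 1 1) hN2; rewrite /= mul2E n01 mulr0 add0r.
  by rewrite !mxE /=; move/eqP; rewrite mulf_eq0 orbb => /eqP.
move: n00 n01 n10 n11; rewrite !mxE /= !subr0 => n00 n01 n10 n11.
by apply: mx2P; rewrite !mxE /= ?n01 ?n10 //; apply/eqP; rewrite -subr_eq0 ?n00 ?n11.
Qed.
Lemma unip_pm (B : 'M[R]_2) (p : nat) : (0 < p)%N -> (\tr B = 2 \/ \tr B = -2) ->
  \det B = 1 -> (B ^+ p) 0 1 = 0 -> (B ^+ p) 1 0 = 0 -> B = 1 \/ B = -1.
Proof.
move=> p0 [ht|ht] hd h01 h10; first by left; exact: (@unip B p p0).
right; apply: oppr_inj; rewrite opprK; apply: (@unip _ p p0).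
- by move: ht; rewrite !tr2E !mxE -opprD => ->; rewrite opprK.
- by rewrite det2E !mxE !mulrNN -det2E.
- by case: (@neg_pow _ B p) => ->; rewrite ?mxE h01 ?oppr0.
- by case: (@neg_pow _ B p) => ->; rewrite ?mxE h10 ?oppr0.
Qed.

Lemma diag_mul00 (A B : 'M[R]_2) : A 0 1 = 0 -> (A * B) 0 0 = A 0 0 * B 0 0.
Proof. by move=> h; rewrite mul2E h mul0r addr0. Qed.

Lemma diag_mulE (A B : 'M[R]_2) : A 0 1 = 0 -> A 1 0 = 0 -> B 0 1 = 0 -> B 1 0 = 0 ->
  (A * B) 0 1 = 0 /\ (A * B) 1 0 = 0.
Proof. by move=> a b c d; rewrite !mul2E a b c d !mulr0 !mul0r !addr0. Qed.

Lemma diag_powE (A : 'M[R]_2) n : A 0 1 = 0 -> A 1 0 = 0 ->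
  [/\ (A ^+ n) 0 0 = A 0 0 ^+ n, (A ^+ n) 0 1 = 0 & (A ^+ n) 1 0 = 0].
Proof.
move=> a b; elim: n => [|n [IH1 IH2 IH3]]; first by rewrite !expr0 !mxE.
rewrite !exprS diag_mul00 // IH1; split=> //; by case: (@diag_mulE A _ a b IH2 IH3).
Qed.
End M2.

Lemma ord3_cases (i : 'I_3) : i = i0 \/ i = i1 \/ i = i2.
Proof.
case: i => [[|[|[|k]]] Hk]; [left|right;left|right;right|by []];
  apply: val_inj; by rewrite /= inordK.
Qed.

Lemma sum3 (f : 'I_3 -> int) : \sum_(i < 3) f i = f i0 + f i1 + f i2.
Proof.
rewrite !big_ord_recr big_ord0 /= -[f i0]add0r.
by congr (_ + f _ + f _ + f _); apply: val_inj; rewrite /= inordK.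
Qed.

Theorem proposition5p5 (p : 'I_3 -> nat) (q : 'I_3 -> int) :
  (forall i, (0 < p i)%N) ->
  (forall i, coprime (p i) `|q i|%N) ->
  euler_number p q != 0 ->
  H1_exponent_2 p q \/ weakly_coprime p ->
  forall chi : word -> CC, ~ exceptional_abelian_character p q chi.
Proof.
move=> hp hcop he hcase chi [[r [Hr Hdiag Hchi]] [rho [Hrho Hchi' Hh Hc]]].
have htr g : \tr (r g) = \tr (rho g).
  have := congr1 (fun f => f [:: (g, false)]) (etrans (esym Hchi) Hchi').
  by rewrite /character /eval_word !big_cons !big_nil /= !mulr1.
case: Hr => Hdet Hcomm Hrel Hprod.
case: Hrho => Hdet' _ Hrel' _.
have Hd g : (r g) 0 1 = 0 /\ (r g) 1 0 = 0.
  by have /is_diag_mxP h := Hdiag g; split; apply: h.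
have hgh : r gh = 1 \/ r gh = -1.
  apply: (@unip_pm _ _ 1) => //; rewrite ?expr1; try apply Hd.
  by rewrite htr; case: Hh => ->; [left|right]; rewrite tr2E !mxE /=; ring.
set eps : CC := r gh 0 0.
have heps : eps * eps = 1 by case: hgh => hg; rewrite /eps hg !mxE /= ?mulrNN mulr1.
have hgh2 : r gh * r gh = 1 by case: hgh => ->; rewrite ?mulrNN mulr1.
set lam : 'I_3 -> CC := fun i => r (gc i) 0 0.
have hrel i : lam i ^+ p i * eps ^+ `|q i|%N = 1.
  have := congr1 (fun M : 'M[CC]_2 => M 0 0) (Hrel i).
  have [d1 d2] := Hd (gc i); have [e1 e2] := Hd gh.
  have [f1 f2 f3] := @diag_powE _ _ (p i) d1 d2.
  have [g1 g2 g3] := @diag_powE _ _ `|q i|%N e1 e2.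
  by rewrite /= pow_invol // diag_mul00 // f1 g1 mxE.
have hprod : lam i0 * lam i1 * lam i2 = 1.
  have := congr1 (fun M : 'M[CC]_2 => M 0 0) Hprod.
  have [a1 a2] := Hd (gc i0); have [b1 b2] := Hd (gc i1).
  have [c1 _] := @diag_mulE _ _ _ a1 a2 b1 b2.
  by rewrite /= diag_mul00 // diag_mul00 // mxE.
have hdet i : lam i * r (gc i) 1 1 = 1.
  have [d1 d2] := Hd (gc i).
  by have := Hdet (gc i); rewrite det2E d1 mul0r subr0.
have hnz i : lam i != 0.
  by apply/eqP => h; have := hdet i; rewrite h mul0r => /eqP; rewrite eq_sym oner_eq0.
have hnot i : lam i ^+ 2 != 1.
  apply/negP; rewrite sqrf_eq1 => hl.
  have hl2 : lam i * lam i = 1 by case/orP: hl => /eqP ->; rewrite ?mulrNN mulr1.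
  have hA11 : r (gc i) 1 1 = lam i.
    by rewrite -[LHS]mul1r -hl2 -mulrA hdet mulr1.
  have htr2 : \tr (rho (gc i)) = 2 \/ \tr (rho (gc i)) = -2.
    by rewrite -htr tr2E hA11 -[r (gc i) 0 0]/(lam i); case/orP: hl => /eqP ->; [left|right]; ring.
  have hrg2 : rho gh * rho gh = 1 by case: Hh => ->; rewrite ?mulrNN mulr1.
  have hu : rho gh ^+ `|q i|%N = 1 \/ rho gh ^+ `|q i|%N = -1 by apply: pm1_pow.
  have hM : rho (gc i) ^+ p i = 1 \/ rho (gc i) ^+ p i = -1.
    have := Hrel' i; rewrite pow_invol //.
    case: hu => ->; first by rewrite mulr1; left.
    by rewrite mulrN1 => h; right; rewrite -h opprK.
  have hoff : (rho (gc i) ^+ p i) 0 1 = 0 /\ (rho (gc i) ^+ p i) 1 0 = 0.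
    by case: hM => ->; rewrite !mxE /= ?oppr0.
  have [h1 h2] := hoff.
  case: (@unip_pm _ _ _ (hp i) htr2 (Hdet' (gc i)) h1 h2); by case: (Hc i).
have hsq j : lam j ^+ (p j * 2) = 1.
  have := congr1 (fun x : CC => x ^+ 2) (hrel j).
  by rewrite /= exprMn -exprM exprAC expr2 heps !expr1n mulr1.
case: hcase => [hH1|[i hi]].
- pose v := fun g : 'I_4 => if g == gc i0 then 1%:Z else 0.
  have [a [b [ha hb]]] := hH1 v.
  have e0 := ha i0; have e1 := ha i1; have e2 := ha i2.
  rewrite /v /= in e0 e1 e2 hb.
  have g10 : (gc i1 == gc i0) = false by apply/eqP => /(congr1 val); rewrite /= !inordK.
  have g20 : (gc i2 == gc i0) = false by apply/eqP => /(congr1 val); rewrite /= !inordK.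
  have gh0 : (gh == gc i0) = false by apply/eqP => /(congr1 val); rewrite /= !inordK.
  rewrite eqxx mulr1 in e0; rewrite g10 mulr0 in e1; rewrite g20 mulr0 in e2.
  rewrite gh0 mulr0 sum3 in hb.
  apply: (negP (hnot i0)); apply/eqP.
  exact: (@h1_lemma _ (lam i0) (lam i1) (lam i2) eps (p i0) (p i1) (p i2) (q i0) (q i1) (q i2)
    (a i0) (a i1) (a i2) b heps (hnz _) (hnz _) (hnz _) hprod (hrel _) (hrel _) (hrel _) e0 e1 e2 hb).
- have n10 : i1 != i0 by apply/eqP => /(congr1 val); rewrite /= !inordK.
  have n20 : i2 != i0 by apply/eqP => /(congr1 val); rewrite /= !inordK.
  have n21 : i2 != i1 by apply/eqP => /(congr1 val); rewrite /= !inordK.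
  have n01 : i0 != i1 by rewrite eq_sym.
  have n02 : i0 != i2 by rewrite eq_sym.
  have n12 : i1 != i2 by rewrite eq_sym.
  case: (ord3_cases i) => [->|[->|->]] in hi *.
  + apply: (negP (hnot i0)); apply/eqP.
    exact: (@three_lemma _ _ _ _ _ _ _ hprod (hsq _) (hsq _) (hsq _) (hi _ n10) (hi _ n20) (hp _)).
  + apply: (negP (hnot i1)); apply/eqP.
    apply: (@three_lemma _ _ _ _ _ _ _ _ (hsq _) (hsq _) (hsq _) (hi _ n01) (hi _ n21) (hp _)).
    by rewrite (mulrC (lam i1)).
  + apply: (negP (hnot i2)); apply/eqP.
    apply: (@three_lemma _ _ _ _ _ _ _ _ (hsq _) (hsq _) (hsq _) (hi _ n02) (hi _ n12) (hp _)).
    by rewrite -hprod; ring.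
Qed.
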